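(* Let $q$ be a prime power. Let $2\leq s\leq k$ be integers. Then \[ n_q(k,s)\leq \frac{q^3-q+1}{q^4}\genfrac{[}{]}{0pt}{}{k}{s}_q. \]
   Context: For a $(k - s)$-dimensional affine subspace $H$ of $\mathbb{F}_q^k$ not passing through the origin, $n_q(k,s)$ denotes the number of $s$-dimensional affine subspaces through the origin that are disjoint from $H$ (this is independent of the choice of $H$). For integers $0 \leq s \leq k$, the $q$-binomial (Gaussian) coefficient is $\genfrac{[}{]}{0pt}{}{k}{s}_q = \frac{(q^k - 1) \cdots (q^{k - s+ 1} - 1)}{(q^s - 1) \cdots (q - 1)}$ (empty product equal to $1$), and it is defined to be $0$ for other values of $s,k$. *)

(* Defs.v *)
From HB Require Import structures.
From mathcomp Require Import all_boot all_order all_algebra.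
Set Implicit Arguments. Unset Strict Implicit. Unset Printing Implicit Defensive.
Import Order.TTheory GRing.Theory Num.Theory.
Local Open Scope ring_scope.

Definition qbinom (q k s : nat) : rat :=
  if (s <= k)%N then
    \prod_(i < s) (((q ^ (k - i))%:R - 1) / ((q ^ i.+1)%:R - 1))
  else 0.

(* The affine subspace v + <U> (U : row space of the matrix U). A linear
   subspace W (row space of W) is disjoint from it iff no x in W has
   x - v in U. *)
Definition disjoint_affine (F : finFieldType) (k : nat)
  (v : 'rV[F]_k) (U W : 'M[F]_k) : bool :=
  [forall x : 'rV[F]_k, (x <= W)%MS ==> ~~ ((x - v) <= U)%MS] .

(* n_q(k,s) relative to H = v + rowspace U: number of s-dimensional linear
   subspaces of F^k (represented canonically by <<A>>%MS) disjoint from H. *)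
Definition nq (F : finFieldType) (k s : nat) (v : 'rV[F]_k) (U : 'M[F]_k) : nat :=
  #|[set <<A>>%MS | A in [pred A : 'M[F]_k |
       (\rank A == s) && disjoint_affine v U A]]|.

(* Main.v *)
Require Import Defs.
From HB Require Import structures.
From mathcomp Require Import all_boot all_order all_algebra.
From mathcomp Require Import ring lra zify.
Set Implicit Arguments. Unset Strict Implicit. Unset Printing Implicit Defensive.
Import Order.TTheory GRing.Theory Num.Theory.
Local Open Scope ring_scope.

Fixpoint aa (w : rat) (m : nat) : rat :=
  match m with
  | 0 => 1
  | m'.+1 => if m' is 0 then 1 else (1 - w ^+ m') * aa w m' + w ^+ m'.+1
  end.

Fixpoint bb (w : rat) (m : nat) : rat :=
  match m with
  | 0 => 1
  | m'.+1 => (1 - w ^+ m') * bb w m' + aa w m'.+1 * w ^+ m'.+1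
  end.

Lemma aa0 w : aa w 0 = 1. Proof. by []. Qed.
Lemma aa1 w : aa w 1 = 1. Proof. by []. Qed.
Lemma aaS w m : aa w m.+2 = (1 - w ^+ m.+1) * aa w m.+1 + w ^+ m.+2. Proof. by []. Qed.
Lemma bb0 w : bb w 0 = 1. Proof. by []. Qed.
Lemma bbS w m : bb w m.+1 = (1 - w ^+ m) * bb w m + aa w m.+1 * w ^+ m.+1. Proof. by []. Qed.
Arguments aa : simpl never.
Arguments bb : simpl never.

Definition Gb (w : rat) (r m : nat) : rat :=
  if (r + 2 <= m)%N then 1 else if (r + 1 == m)%N then aa w m else bb w m.

Lemma wpow (w : rat) n : 0 < w < 1 -> 0 < w ^+ n <= 1.
Proof.
move=> /andP [w0 w1]; rewrite exprn_gt0 //=; apply: exprn_ile1; lra.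
Qed.

Lemma aa_bounds w m : 0 < w < 1 -> w <= aa w m <= 1.
Proof.
move=> hw; have [w0 w1] : 0 < w /\ w < 1 by case/andP: hw.
elim: m => [|m IH]; first by rewrite aa0; apply/andP; split; lra.
case: m IH => [|m] IH; first by rewrite aa1; apply/andP; split; lra.
rewrite aaS.
have := wpow m.+1 hw => /andP [u0 u1].
case/andP: IH => a0 a1.
rewrite [w ^+ m.+2]exprSr; set u := w ^+ m.+1 in u0 u1 *.
apply/andP; split; nra.
Qed.

Lemma bb_bounds w m : 0 < w < 1 -> 0 <= bb w m <= 1 /\ ((0 < m)%N -> bb w m <= w).
Proof.
move=> hw; have [w0 w1] : 0 < w /\ w < 1 by case/andP: hw.
elim: m => [|m [IH1 IH2]]; first by rewrite bb0; split => //; apply/andP; split; lra.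
rewrite bbS.
have := wpow m hw => /andP [u0 u1].
have := aa_bounds m.+1 hw => /andP [a0 a1].
case/andP: IH1 => b0 b1.
have [m0|mpos] := posnP m.
  rewrite m0 expr0 subrr mul0r add0r expr1 aa1.
  split; [apply/andP; split; lra | move=> _; lra].
have b2 : bb w m <= w by apply: IH2.
rewrite [w ^+ m.+1]exprSr; set u := w ^+ m in u0 u1 *; set a := aa w m.+1 in a0 a1 *.
have uw0 : 0 <= u * w by rewrite mulr_ge0 // ltW.
have h1 : a * (u * w) <= u * w by rewrite ler_piMl.
have h2 : 0 <= a * (u * w) by rewrite mulr_ge0 //; lra.
have h3 : (1 - u) * bb w m <= (1 - u) * w by rewrite ler_wpM2l // subr_ge0.
have h4 : 0 <= (1 - u) * bb w m by rewrite mulr_ge0 // subr_ge0.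
have h5 : (1 - u) * w + u * w = w by ring.
split; [apply/andP; split; lra | move=> _; lra].
Qed.

Lemma aa_le_A w m : 0 < w < 1 -> (3 <= m)%N -> aa w m <= 1 - w ^+ 2 + w ^+ 3.
Proof.
move=> hw; have [w0 w1] : 0 < w /\ w < 1 by case/andP: hw.
elim: m => [|m IH] // hm.
case: m IH hm => [|[|[|m]]] IH hm //.
  have h : 0 <= (1 - w * w) * (w * (1 - w)) by rewrite mulr_ge0 // ?mulr_ge0; nra.
  rewrite !aaS aa1 !exprS !expr0 !mulr1; nra.
have {}IH := IH isT.
rewrite aaS [w ^+ m.+4]exprSr.
have := wpow m.+3 hw => /andP [u0 u1].
set u := w ^+ m.+3 in u0 u1 *.
have wA : w <= 1 - w ^+ 2 + w ^+ 3.
  have : 0 <= (1 - w) * (1 - w) * (1 + w) by rewrite !mulr_ge0 //; lra.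
  rewrite !exprS expr0 !mulr1; nra.
have h1 : (1 - u) * aa w m.+3 <= (1 - u) * (1 - w ^+ 2 + w ^+ 3) by rewrite ler_wpM2l // subr_ge0.
have h2 : u * w <= u * (1 - w ^+ 2 + w ^+ 3) by rewrite ler_wpM2l // ltW.
have h3 : (1 - u) * (1 - w ^+ 2 + w ^+ 3) + u * (1 - w ^+ 2 + w ^+ 3) = 1 - w ^+ 2 + w ^+ 3 by ring.
lra.
Qed.

Lemma bb_le_c w m : 0 < w < 1 -> (2 <= m)%N -> bb w m <= w - w ^+ 3 + w ^+ 4.
Proof.
move=> hw; have [w0 w1] : 0 < w /\ w < 1 by case/andP: hw.
elim: m => [|m IH] // hm.
case: m IH hm => [|[|m]] IH hm //.
  rewrite !bbS bb0 aaS aa1 !exprS !expr0 !mulr1; nra.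
have {}IH := IH isT.
have hA := @aa_le_A w m.+3 hw isT.
rewrite bbS [w ^+ m.+3]exprSr.
have := wpow m.+2 hw => /andP [u0 u1].
set u := w ^+ m.+2 in u0 u1 *; set a := aa w m.+3 in hA *.
have h1 : (1 - u) * bb w m.+2 <= (1 - u) * (w - w ^+ 3 + w ^+ 4) by rewrite ler_wpM2l // subr_ge0.
have uw : 0 <= u * w by rewrite mulr_ge0 // ltW.
have h2 : a * (u * w) <= (1 - w ^+ 2 + w ^+ 3) * (u * w) by rewrite ler_wpM2r.
have h3 : (1 - u) * (w - w ^+ 3 + w ^+ 4) + (1 - w ^+ 2 + w ^+ 3) * (u * w) = w - w ^+ 3 + w ^+ 4 by ring.
lra.
Qed.

Lemma Gb0 w m : Gb w 0 m = 1.
Proof. by rewrite /Gb; case: m => [|[|m]] //=; rewrite ?bb0 ?aa1. Qed.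

Lemma Gb_bounds w r m : 0 < w < 1 -> 0 <= Gb w r m <= 1.
Proof.
move=> hw; rewrite /Gb; case: ifP => _; first by [].
case: ifP => _.
  by have /andP [a0 a1] := aa_bounds m hw; rewrite a1 andbT; apply: le_trans a0; case/andP: hw => /ltW.
by have [/andP [-> ->] _] := bb_bounds m hw.
Qed.

Lemma Gb_mono w r m : 0 < w < 1 -> (r + 1 <= m)%N -> (2 <= m)%N ->
  Gb w r (m - 1) <= Gb w r m.
Proof.
move=> hw h1 h2; rewrite /Gb.
have [h3|h3] := leqP (r + 3) m.
  have e1 : (r + 2 <= m - 1)%N = true by lia.
  have e2 : (r + 2 <= m)%N = true by lia.
  by rewrite e1 e2.
have [h4|h4] := leqP (r + 2) m.
  have -> : (r + 2 <= m - 1)%N = false by lia.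
  have -> : (r + 1 == m - 1)%N = true by lia.
  by have /andP [_ ->] := aa_bounds (m - 1) hw.
have -> : (r + 2 <= m - 1)%N = false by lia.
have -> : (r + 1 == m - 1)%N = false by lia.
have -> : (r + 1 == m)%N = true by lia.
have [_ b] := bb_bounds (m - 1) hw.
apply: le_trans (b _) _; first by lia.
by have /andP [-> _] := aa_bounds m hw.
Qed.

Lemma Gb_rec w r m : 0 < w < 1 -> (r + 1 <= m)%N -> (1 <= m)%N ->
  (1 - w ^+ (m - 1)) * Gb w r (m - 1) + Gb w r m * w ^+ m <= Gb w r.+1 m.
Proof.
move=> hw h1 h2.
have [w0 w1] : 0 < w /\ w < 1 by case/andP: hw.
have [h3|h3] := leqP (r + 3) m.
  have -> : Gb w r.+1 m = 1 by rewrite /Gb ifT //; lia.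
  have /andP [g0 g1] := Gb_bounds r (m - 1) hw.
  have /andP [g2 g3] := Gb_bounds r m hw.
  have em : w ^+ m = w ^+ (m - 1) * w by rewrite -exprSr; congr (_ ^+ _); lia.
  have /andP [u0 u1] := wpow (m - 1) hw.
  rewrite em.
  have k1 : (1 - w ^+ (m - 1)) * Gb w r (m - 1) <= 1 - w ^+ (m - 1).
    by rewrite ler_piMr // subr_ge0.
  have k2 : Gb w r m * (w ^+ (m - 1) * w) <= w ^+ (m - 1) * w.
    by rewrite ler_piMl // mulr_ge0 // ltW.
  have k3 : w ^+ (m - 1) * w <= w ^+ (m - 1) by rewrite ler_piMr // ?ltW.
  lra.
have : m = r.+2 \/ m = r.+1 by lia.
case => -> {h1 h2 h3}; rewrite /Gb.
  have -> : (r.+1 + 2 <= r.+2)%N = false by lia.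
  have -> : (r.+1 + 1 == r.+2)%N = true by lia.
  have -> : (r + 2 <= r.+2)%N = true by lia.
  have -> : (r.+2 - 1)%N = r.+1 by lia.
  have -> : (r + 2 <= r.+1)%N = false by lia.
  have -> : (r + 1 == r.+1)%N = true by lia.
  by rewrite aaS mul1r.
have -> : (r.+1 + 2 <= r.+1)%N = false by lia.
have -> : (r.+1 + 1 == r.+1)%N = false by lia.
have -> : (r + 2 <= r.+1)%N = false by lia.
have -> : (r + 1 == r.+1)%N = true by lia.
have -> : (r.+1 - 1)%N = r by lia.
have -> : (r + 2 <= r)%N = false by lia.
have -> : (r + 1 == r)%N = false by lia.
by rewrite bbS.
Qed.

Lemma Gb_diag w s : 0 < w < 1 -> (2 <= s)%N -> Gb w s s <= w - w ^+ 3 + w ^+ 4.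
Proof.
move=> hw hs; rewrite /Gb.
have -> : (s + 2 <= s)%N = false by lia.
have -> : (s + 1 == s)%N = false by lia.
exact: bb_le_c.
Qed.

Lemma step_ineq (q w X Y : rat) (j d m : nat) :
  1 < q -> w = q^-1 -> (j <= d)%N -> (1 <= m)%N -> 0 <= X -> 0 <= Y ->
  (m == 1)%N || (Y <= X) ->
  (q ^+ d - q ^+ j) * X + (q ^+ (d + m) - q ^+ d.+1) * Y <=
  ((1 - w ^+ (m - 1)) * Y + X * w ^+ m) * (q ^+ (d + m) - q ^+ j).
Proof.
move=> hq -> hjd; case: m => [|n] // _ X0 Y0 hXY.
have q0 : 0 < q by lra.
have T0 : 0 < q ^+ n by apply: exprn_gt0.
have a0 : 0 < q ^+ j by apply: exprn_gt0.
rewrite subSS subn0 !exprVn.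
have E : ((1 - (q ^+ n)^-1) * Y + X * (q ^+ n.+1)^-1) * (q ^+ (d + n.+1) - q ^+ j)
   - ((q ^+ d - q ^+ j) * X + (q ^+ (d + n.+1) - q ^+ d.+1) * Y)
   = q ^+ j * (X * (1 - (q ^+ n)^-1 * q^-1) - Y * (1 - (q ^+ n)^-1)).
  rewrite exprD !exprS.
  field; apply/andP; split; apply: lt0r_neq0 => //.
rewrite -subr_ge0 E; apply: mulr_ge0; first exact: ltW.
set W1 := (q ^+ n)^-1.
have W10 : 0 < W1 by rewrite invr_gt0.
have W11 : W1 <= 1.
  by rewrite /W1 invr_le1 ?unitfE ?lt0r_neq0 //; apply: exprn_ege1; lra.
have qi0 : 0 < q^-1 by rewrite invr_gt0.
have qi1 : q^-1 <= 1.
  by rewrite invr_le1 ?unitfE ?lt0r_neq0 //; lra.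
have k1 : W1 * q^-1 <= W1 by rewrite ler_piMr // ltW.
case/orP: hXY => [n0|YX].
  have n00 : n = 0%N by move: n0; rewrite eqSS => /eqP.
  have -> : W1 = 1 by rewrite /W1 n00 expr0 invr1.
  rewrite subrr mulr0 subr0 mul1r; apply: mulr_ge0 => //; lra.
have k2 : X * (1 - W1) <= X * (1 - W1 * q^-1) by rewrite ler_wpM2l //; lra.
have k3 : Y * (1 - W1) <= X * (1 - W1) by rewrite ler_wpM2r // subr_ge0.
lra.
Qed.

Section LinAlg.
Variables (F : finFieldType) (k : nat).
Local Notation q := #|F|.
Local Notation V := 'rV[F]_k.

Lemma card_sub_space m (A : 'M[F]_(m, k)) :
  #|[set x : V | (x <= A)%MS]| = (q ^ \rank A)%N.
Proof.
have -> : [set x : V | (x <= A)%MS] = [set u *m row_base A | u in 'rV_(\rank A)].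
  apply/setP => x; rewrite inE; apply/idP/imsetP.
    rewrite -(eq_row_base A) => /submxP [u ->]; by exists u.
  by case=> u _ ->; apply: submx_trans (submxMl u (row_base A)) _; rewrite eq_row_base.
rewrite card_imset ?card_mx ?mul1n //.
exact: row_free_inj (row_base_free A).
Qed.

Lemma rank_add_vec (S : 'M[F]_k) (b : V) :
  ~~ (b <= S)%MS -> \rank (S + b)%MS = (\rank S).+1.
Proof.
move=> nbS.
have b0 : b != 0 by apply: contra nbS => /eqP ->; rewrite sub0mx.
have rb : \rank b = 1%N by rewrite rank_rV b0.
have c0 : \rank (S :&: b)%MS = 0%N.
  have le1 : (\rank (S :&: b)%MS <= 1)%N by rewrite -[X in (_ <= X)%N]rb mxrankS ?capmxSr.
  case: (ltnP (\rank (S :&: b)%MS) 1) => [|ge1]; first by case: (\rank _).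
  have : (\rank (S :&: b)%MS == \rank b) by rewrite rb eqn_leq le1 ge1.
  rewrite (mxrank_leqif_eq (capmxSr S b)) => /eqmxP e.
  by move: (capmxSl S b); rewrite e (negbTE nbS).
have := mxrank_sum_cap S b; rewrite c0 rb addn0 addn1; done.
Qed.

Lemma card_diff_space m1 m2 (W : 'M[F]_(m1, k)) (S : 'M[F]_(m2, k)) :
  (S <= W)%MS ->
  #|[set x : V | (x <= W)%MS && ~~ (x <= S)%MS]| = (q ^ \rank W - q ^ \rank S)%N.
Proof.
move=> SW.
have -> : [set x : V | (x <= W)%MS && ~~ (x <= S)%MS] =
          [set x : V | (x <= W)%MS] :\: [set x : V | (x <= S)%MS].
  by apply/setP => x; rewrite !inE andbC.
rewrite cardsD !card_sub_space.
have -> : [set x : V | (x <= W)%MS] :&: [set x : V | (x <= S)%MS] = [set x : V | (x <= S)%MS].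
  apply/setP => x; rewrite !inE; apply/andP/idP => [[]//|xS]; split => //.
  exact: submx_trans xS SW.
by rewrite card_sub_space.
Qed.

Lemma card_out_space m (M : 'M[F]_(m, k)) :
  #|[set x : V | ~~ (x <= M)%MS]| = (q ^ k - q ^ \rank M)%N.
Proof.
have := card_diff_space (submx1 M); rewrite mxrank1 => <-.
by apply: eq_card => x; rewrite !inE submx1.
Qed.

Lemma exchange_vec (M : 'M[F]_k) (v b : V) :
  (b <= M + v)%MS -> ~~ (b <= M)%MS -> (v <= M + b)%MS.
Proof.
move=> bMv nbM.
have nvM : ~~ (v <= M)%MS.
  apply: contra nbM => vM; apply: submx_trans bMv _.
  by rewrite addsmx_sub submx_refl vM.
have sub : ((M + b)%MS <= (M + v)%MS)%MS by rewrite addsmx_sub addsmxSl bMv.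
have : (\rank (M + b)%MS == \rank (M + v)%MS) by rewrite !rank_add_vec.
rewrite (mxrank_leqif_eq sub) => /eqmxP e.
by rewrite e addsmxSr.
Qed.

Fixpoint tot (P : 'M[F]_k -> bool) (r : nat) (S : 'M[F]_k) : nat :=
  if r is r'.+1 then \sum_(b : V | ~~ (b <= S)%MS) tot P r' (S + b)%MS
  else nat_of_bool (P S).

Fixpoint cntW (W : 'M[F]_k) (r : nat) (S : 'M[F]_k) : nat :=
  if r is r'.+1 then \sum_(b : V | (b <= W)%MS && ~~ (b <= S)%MS) cntW W r' (S + b)%MS
  else 1%N.

Lemma cntW_val (W : 'M[F]_k) r (S : 'M[F]_k) : (S <= W)%MS ->
  cntW W r S = (\prod_(i < r) (q ^ \rank W - q ^ (\rank S + i)))%N.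
Proof.
elim: r S => [|r IH] S SW /=; first by rewrite big_ord0.
rewrite big_ord_recl addn0.
transitivity (\sum_(b : V | (b <= W)%MS && ~~ (b <= S)%MS)
                 (\prod_(i < r) (q ^ \rank W - q ^ (\rank S + bump 0 i)))%N).
  apply: eq_bigr => b /andP [bW nbS]; rewrite IH; last by rewrite addsmx_sub SW bW.
  by apply: eq_bigr => i _; rewrite rank_add_vec // addSn addnS.
rewrite sum_nat_const; congr (_ * _)%N.
by rewrite -(card_diff_space SW); apply: eq_card => x; rewrite inE.
Qed.

Lemma tot_mono (P P' : 'M[F]_k -> bool) r S : (forall X, P X -> P' X) ->
  (tot P r S <= tot P' r S)%N.
Proof.
move=> PP; elim: r S => [|r IH] S /=.
  by case: (P S) (PP S) => // ->.
by apply: leq_sum => b _; apply: IH.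
Qed.

Lemma dcount (SS : {set 'M[F]_k}) (hSet : forall W, W \in SS -> <<W>>%MS = W) r S :
  (\sum_(W in SS | (S <= W)%MS && (\rank W == \rank S + r)%N) cntW W r S
     <= tot (fun X => <<X>>%MS \in SS) r S)%N.
Proof.
elim: r S => [|r IH] S /=.
  rewrite big_mkcond /=.
  apply: (@leq_trans (\sum_(W : 'M[F]_k) (if (W == <<S>>%MS) && (<<S>>%MS \in SS) then 1 else 0))%N).
    apply: leq_sum => W _.
    case WS: (W \in SS) => //=; case: ifP => // /andP [SW rW].
    rewrite addn0 in rW.
    have e : (S == W)%MS by rewrite -(mxrank_leqif_eq SW) eq_sym.
    have eSW : <<S>>%MS = W by rewrite -(hSet W WS); apply: eq_genmx; apply/eqmxP.
    by rewrite eSW eqxx WS.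
  case: (<<S>>%MS \in SS).
    by under eq_bigr => W _ do rewrite andbT; rewrite -big_mkcond big_pred1_eq.
  by rewrite big1 // => W _; rewrite andbF.
rewrite (exchange_big_dep (fun b : V => ~~ (b <= S)%MS)) /=; last by move=> W b _ /andP [].
apply: leq_sum => b nbS.
apply: leq_trans (IH (S + b)%MS).
rewrite leq_eqVlt; apply/orP; left; apply/eqP; apply: eq_bigl => W.
rewrite addsmx_sub rank_add_vec // addSn -addnS nbS andbT.
by case: (W \in SS) (S <= W)%MS (b <= W)%MS (\rank W == _)%N => [] [] [] [].
Qed.

Lemma zero_tot (v : V) (U : 'M[F]_k) r (S : 'M[F]_k) :
  (v <= S + U)%MS -> tot (fun X => ~~ (v <= X + U)%MS) r S = 0%N.
Proof.
elim: r S => [|r IH] S vM /=; first by rewrite vM.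
rewrite big1 // => b _; apply: IH; apply: submx_trans vM _.
by rewrite addsmxS ?addsmxSl.
Qed.

Lemma q_gt1 : (1 < q)%N.
Proof. exact: card_finNzRing_gt1. Qed.

Lemma w01 : 0 < ((q%:R : rat)^-1) < 1.
Proof.
have h : (1 : rat) < q%:R by rewrite ltr1n q_gt1.
rewrite invr_gt0 (lt_trans ltr01 h) /= invf_lt1 //; apply: lt_trans h; exact: ltr01.
Qed.

Lemma markov (v : V) (U : 'M[F]_k) r (S : 'M[F]_k) :
  (r <= k - \rank (S + U))%N ->
  ((tot (fun X => ~~ (v <= X + U)%MS) r S)%:R : rat) <=
    Gb (q%:R)^-1 r (k - \rank (S + U)) *
      (\prod_(i < r) (q ^ k - q ^ (\rank S + i)))%N%:R.
Proof.
have hw := w01.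
elim: r S => [|r IH] S hr.
  rewrite /= Gb0 big_ord0 mul1r; by case: (~~ _).
have [vM|vM] := boolP (v <= S + U)%MS.
  rewrite zero_tot // mulr_ge0 //.
  by have /andP [] := Gb_bounds r.+1 (k - \rank (S + U)) hw.
set M := (S + U)%MS in hr vM *.
set d := \rank M in hr *; set j := \rank S.
have SM : (S <= M)%MS by rewrite addsmxSl.
have jd : (j <= d)%N by rewrite mxrankS.
have dk : (d < k)%N.
  rewrite ltn_neqAle rank_leq_col andbT; apply: contra vM => /eqP dk.
  by apply: submx_full; rewrite /row_full -/d dk.
set m := (k - d)%N in hr *.
have km : k = (d + m)%N by rewrite /m; lia.
have rv : \rank (M + v)%MS = d.+1 by rewrite rank_add_vec.
set P := (fun X : 'M[F]_k => ~~ (v <= X + U)%MS).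
set Pi' := ((\prod_(i < r) (q ^ k - q ^ (j.+1 + i)))%N%:R : rat).
have Hst : forall b : V, ~~ (b <= S)%MS && (b <= M)%MS ->
    ((tot P r (S + b)%MS)%:R : rat) <= Gb (q%:R)^-1 r m * Pi'.
  move=> b /andP [nbS bM].
  have e : \rank ((S + b)%MS + U)%MS = d.
    apply/anti_leq/andP; split; apply: mxrankS.
      by rewrite !addsmx_sub SM bM /M addsmxSr.
    by rewrite addsmxS ?addsmxSl.
  have := IH (S + b)%MS; rewrite e rank_add_vec //; apply; lia.
have Hgr : forall b : V, (~~ (b <= S)%MS && ~~ (b <= M)%MS) && ~~ (b <= M + v)%MS ->
    ((tot P r (S + b)%MS)%:R : rat) <= Gb (q%:R)^-1 r (m - 1) * Pi'.
  move=> b /andP [/andP [nbS nbM] _].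
  have e : \rank ((S + b)%MS + U)%MS = d.+1.
    rewrite -(rank_add_vec nbM); apply/anti_leq/andP; split; apply: mxrankS.
      rewrite !addsmx_sub addsmxSr (submx_trans SM (addsmxSl M b)) /=.
      by apply: submx_trans (addsmxSr S U) (addsmxSl M b).
    rewrite addsmx_sub (submx_trans (addsmxSr S b) (addsmxSl _ U)) andbT.
    by rewrite /M addsmxS ?addsmxSl.
  have := IH (S + b)%MS; rewrite e rank_add_vec //.
  have -> : (k - d.+1 = m - 1)%N by rewrite /m; lia.
  apply; lia.
rewrite /= (bigID (fun b => (b <= M)%MS)) /=.
rewrite [X in (_ + X)%N](bigID (fun b : V => (b <= M + v)%MS)) /=.
rewrite [X in (_ + (X + _))%N]big1 ?add0n; last first.
  move=> b /andP [/andP [_ nbM] bMv]; apply: zero_tot.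
  apply: submx_trans (exchange_vec bMv nbM) _.
  rewrite addsmx_sub; apply/andP; split; first by rewrite addsmxS ?addsmxSl.
  by apply: submx_trans (addsmxSr S b) (addsmxSl _ U).
rewrite natrD !natr_sum.
apply: le_trans (lerD (ler_sum _ Hst) (ler_sum _ Hgr)) _.
have c1 : forall cc : rat, \sum_(i : V | ~~ (i <= S)%MS && (i <= M)%MS) cc = cc *+ (q ^ d - q ^ j)%N.
  move=> cc; transitivity (\sum_(i in [set x : V | (x <= M)%MS && ~~ (x <= S)%MS]) cc).
    by apply: eq_bigl => x; rewrite inE andbC.
  by rewrite sumr_const card_diff_space.
have c2 : forall cc : rat, \sum_(i : V | ~~ (i <= S)%MS && ~~ (i <= M)%MS && ~~ (i <= M + v)%MS) cc
     = cc *+ (q ^ k - q ^ d.+1)%N.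
  move=> cc; transitivity (\sum_(i in [set x : V | ~~ (x <= M + v)%MS]) cc).
    apply: eq_bigl => x; rewrite inE; case: (boolP (x <= M + v)%MS) => h; rewrite ?andbF ?andbT //.
    have nxM : ~~ (x <= M)%MS by apply: contra h => xM; apply: submx_trans xM (addsmxSl M v).
    by rewrite nxM andbT; apply: contra nxM => xS; apply: submx_trans xS SM.
  by rewrite sumr_const card_out_space rv.
rewrite c1 c2 big_ord_recl addn0 natrM.
have -> : ((\prod_(i < r) (q ^ k - q ^ (j + bump 0 i)))%N%:R : rat) = Pi'.
  by congr (_ %:R); apply: eq_bigr => i _; rewrite /bump leq0n add1n addnS addSn.
rewrite -(mulr_natr (_ * Pi')) -(mulr_natr (_ * Pi') (q ^ k - _)%N) !(mulrAC _ Pi') -mulrDl mulrA.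
apply: ler_wpM2r; first exact: ler0n.
set X := Gb _ r m; set Y := Gb _ r (m - 1); set G := Gb _ r.+1 m.
have q0 : (0 < q)%N by apply: ltnW q_gt1.
rewrite !natrB ?leq_pexp2l //; try lia.
rewrite !natrX.
set qq := (q%:R : rat).
have e1 : qq ^+ k = qq ^+ (d + m) by rewrite -km.
rewrite e1 mulrC (mulrC Y).
have hq : 1 < qq by rewrite /qq ltr1n q_gt1.
have /andP [X0 _] := Gb_bounds r m hw.
have /andP [Y0 _] := Gb_bounds r (m - 1) hw.
have m1 : (1 <= m)%N by lia.
have hXY : (m == 1)%N || (Y <= X).
  have [hm|hm] := leqP m 1.
    by have -> : (m == 1)%N by lia.
  by rewrite orbC Gb_mono //; lia.
apply: le_trans (step_ineq hq erefl jd m1 X0 Y0 hXY) _.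
apply: ler_wpM2r; first by rewrite subr_ge0 ler_eXn2l //; lia.
apply: Gb_rec => //; lia.
Qed.

End LinAlg.

Lemma qbinomE (q k s : nat) : (1 < q)%N -> (s <= k)%N ->
  ((\prod_(i < s) (q ^ k - q ^ i))%N%:R : rat) =
  ((\prod_(i < s) (q ^ s - q ^ i))%N%:R) * qbinom q k s.
Proof.
move=> hq hsk; rewrite /qbinom hsk !natr_prod.
have q0 : (0 < q)%N by apply: ltnW.
have E1 : forall n i, (i <= n)%N -> ((q ^ n - q ^ i)%N%:R : rat) = (q ^ i)%N%:R * ((q ^ (n - i))%N%:R - 1).
  move=> n i hi; have e : (q ^ n = q ^ i * q ^ (n - i))%N by rewrite -expnD subnKC.
  rewrite e natrB; last by rewrite leq_pmulr // expn_gt0 q0.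
  by rewrite natrM; ring.
under eq_bigr => i _ do rewrite (E1 k i (leq_trans (ltnW (ltn_ord i)) hsk)).
under [X in _ = X * _]eq_bigr => i _ do rewrite (E1 s i (ltnW (ltn_ord i))).
rewrite !big_split /= -mulrA; congr (_ * _).
rewrite [X in _ = X * _](reindex_inj rev_ord_inj) /=.
under [X in _ = X * _]eq_bigr => i _ do rewrite subKn //.
rewrite prodfV mulrCA mulfV ?mulr1 //.
rewrite prodf_seq_neq0; apply/allP => i _ /=.
rewrite subr_eq0 pnatr_eq1 -(expn0 q) eqn_exp2l // ; by [].
Qed.


Theorem lemma3p1 (F : finFieldType) (k s : nat)
  (hs : (2 <= s)%N) (hsk : (s <= k)%N)
  (v : 'rV[F]_k) (U : 'M[F]_k)
  (hU : \rank U = (k - s)%N) (hv : ~~ (v <= U)%MS) :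
  ((@nq F k s v U)%:R : rat) <=
    ((#|F|%:R ^+ 3 - #|F|%:R + 1) / (#|F|%:R ^+ 4)) * qbinom #|F| k s.
Proof.
set q := #|F|.
set SS := [set <<A>>%MS | A in [pred A : 'M[F]_k | (\rank A == s) && disjoint_affine v U A]].
have nqE : @nq F k s v U = #|SS| by [].
have hSet : forall W, W \in SS -> <<W>>%MS = W.
  by move=> W /imsetP [A _ ->]; exact: genmx_id.
have hq := @q_gt1 F.
set g := (\prod_(i < s) (q ^ s - q ^ i))%N.
set Pi := (\prod_(i < s) (q ^ k - q ^ i))%N.
have step1 : (#|SS| * g = \sum_(W in SS | ((0%R : 'M[F]_k) <= W)%MS && (\rank W == \rank (0%R : 'M[F]_k) + s)) cntW W s (0%R : 'M[F]_k))%N.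
  rewrite -sum_nat_const; apply: eq_big => W.
    case WS: (W \in SS) => //=; rewrite sub0mx mxrank0 /=.
    by case/imsetP: WS => A; rewrite inE => /andP [/eqP rA _] ->; rewrite mxrank_gen rA add0n eqxx.
  move=> WS; have rW : \rank W = s.
    by case/imsetP: WS => A; rewrite inE => /andP [/eqP rA _] ->; rewrite mxrank_gen rA.
  rewrite cntW_val ?sub0mx // rW mxrank0.
  by apply: eq_bigr.
have step2 := dcount hSet s (0%R : 'M[F]_k).
have step3 : (tot (fun X => <<X>>%MS \in SS) s (0%R : 'M[F]_k) <= tot (fun X => ~~ (v <= X + U)%MS) s (0%R : 'M[F]_k))%N.
  apply: tot_mono => X /imsetP [A]; rewrite inE => /andP [_ dA] eXA.
  apply/negP => vXU.
  have eXA' : (X :=: A)%MS by apply/eqmxP; apply/genmxP.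
  have : (v <= A + U)%MS by rewrite -(adds_eqmx eXA' (eqmx_refl U)).
  case/sub_addsmxP => u ev.
  move/forallP: dA => /(_ (u.1 *m A)); rewrite submxMl /= ev.
  by rewrite opprD addrA subrr add0r eqmx_opp submxMl.
have step4 := @markov F k v U s (0%R : 'M[F]_k).
rewrite adds0mx_id hU mxrank0 in step4.
have ks : (k - (k - s) = s)%N by lia.
rewrite ks in step4; have {}step4 := step4 (leqnn s).
have step5 := Gb_diag (@w01 F) hs.
have e6 := qbinomE hq hsk.
have gpos : (0 : rat) < g%:R.
  rewrite ltr0n /g; apply/prodn_gt0 => i; rewrite subn_gt0 ltn_exp2l //.
rewrite nqE -(ler_pM2r gpos) -natrM step1.
have h1 : (\sum_(W in SS | ((0%R : 'M[F]_k) <= W)%MS && (\rank W == \rank (0%R : 'M[F]_k) + s)) cntW W s (0%R : 'M[F]_k)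
           <= tot (fun X => ~~ (v <= X + U)%MS) s (0%R : 'M[F]_k))%N by apply: leq_trans step2 step3.
apply: le_trans (_ : _ <= (tot (fun X => ~~ (v <= X + U)%MS) s (0%R : 'M[F]_k))%:R) _.
  by rewrite ler_nat.
apply: le_trans step4 _.
have -> : (\prod_(i < s) (q ^ k - q ^ (0 + i)))%N = Pi by apply: eq_bigr => i _; rewrite add0n.
rewrite e6 mulrA mulrAC; apply: ler_wpM2r; first exact: ltW.
set w := ((q%:R : rat)^-1) in step5 *.
have -> : (q%:R ^+ 3 - q%:R + 1) / q%:R ^+ 4 = w - w ^+ 3 + w ^+ 4.
  rewrite /w; field; rewrite pnatr_eq0 -lt0n; exact: ltnW hq.
have qb0 : 0 <= qbinom q k s.
  by have := ler0n rat Pi; rewrite e6 pmulr_rge0.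
by apply: ler_wpM2r.
Qed.
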